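(* Let $M\in\{0,1\}^{m\times n}$ be the vertex-edge incidence matrix of a simple graph, and let $c\in\mathbb Z^n$. Define $f_{c,M}\colon\mathbb Z^m\to\mathbb Z\cup\{\infty\}$ by \[ f_{c,M}(z)=\min\{c^\top x\mid Mx=z,\ x\in\mathbb Z^n_{\ge0}\}, \] with $f_{c,M}(z)=\infty$ if no such $x$ exists. Then $f_{c,M}$ is SBO jump M-convex.
   Context: $f_{c,M}(z)$ is the minimum cost of a perfect $z$-matching of the graph. For $x,y\in\mathbb Z^m$, write $x\sqsubseteq y$ if $|x_i|\le|y_i|$ and $x_iy_i\ge0$ for all $i$. A $2$-step decomposition of $d\in\mathbb Z^m$ is a multiset of vectors $p^{(1)},\dots,p^{(\ell)}\in\mathbb Z^m$ satisfying: - $\|p^{(k)}\|_1=2$ and $p^{(k)}\sqsubseteq d$ for every $k$; - $d=\sum_k p^{(k)}$. A function $f\colon\mathbb Z^m\to\mathbb Q\cup\{\infty\}$ is SBO jump M-convex if the following holds for every two points $z^{(1)},z^{(2)}$ with $f(z^{(1)}),f(z^{(2)})<\infty$. There must exist a $2$-step decomposition $p^{(1)},\dots,p^{(\ell)}$ of $z^{(2)}-z^{(1)}$ and reals $g^{(1)},\dots,g^{(\ell)}$ such that: - $f(z^{(2)})=f(z^{(1)})+\sum_{k\in[\ell]}g^{(k)}$; - for every $I\subseteq[\ell]$, $f\bigl(z^{(1)}+\sum_{k\in I}p^{(k)}\bigr)\le f(z^{(1)})+\sum_{k\in I}g^{(k)}$. *)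

(* Defs.v *)
From Stdlib Require Import ClassicalEpsilon.
From HB Require Import structures.
From mathcomp Require Import all_boot all_order all_algebra.
Set Implicit Arguments. Unset Strict Implicit. Unset Printing Implicit Defensive.
Import Order.TTheory GRing.Theory Num.Theory.
Local Open Scope ring_scope.

(* M is the vertex-edge incidence matrix of a simple graph with m vertices
   and n edges: 0/1 entries, every column has exactly two ones (no loops),
   and the columns are pairwise distinct (no parallel edges). *)
Definition simple_graph_incidence (m n : nat) (M : 'M[int]_(m, n)) : Prop :=
  [/\ (forall i j, M i j = 0 \/ M i j = 1),
      (forall j, #|[set i | M i j == 1]| = 2%N)
    & (forall j1 j2, col j1 M = col j2 M -> j1 = j2)].

Definition feasible (m n : nat) (M : 'M[int]_(m, n)) (z : 'cV[int]_m)
  (x : 'cV[int]_n) : Prop :=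
  M *m x = z /\ (forall j, 0 <= x j 0).

Definition cost (n : nat) (c : 'cV[int]_n) (x : 'cV[int]_n) : int :=
  \sum_j c j 0 * x j 0.

Definition is_min_cost (m n : nat) (M : 'M[int]_(m, n)) (c : 'cV[int]_n)
  (z : 'cV[int]_m) (v : int) : Prop :=
  (exists2 x, feasible M z x & cost c x = v) /\
  (forall x, feasible M z x -> v <= cost c x).

(* f_{c,M} : Z^m -> Q \cup {oo}, with None standing for oo. *)
Definition f_cM (m n : nat) (M : 'M[int]_(m, n)) (c : 'cV[int]_n)
  (z : 'cV[int]_m) : option rat :=
  match excluded_middle_informative (exists v, is_min_cost M c z v) with
  | left H => Some ((proj1_sig (constructive_indefinite_description _ H))%:~R)
  | right _ => None
  end.

Definition sqsub (m : nat) (x y : 'cV[int]_m) : Prop :=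
  forall i, `|x i 0| <= `|y i 0| /\ 0 <= x i 0 * y i 0.

Definition l1norm (m : nat) (x : 'cV[int]_m) : int := \sum_i `|x i 0|.

(* p_1, ..., p_l (a multiset, given as an indexed family) is a 2-step
   decomposition of d. *)
Definition two_step_decomp (m l : nat) (d : 'cV[int]_m)
  (p : 'I_l -> 'cV[int]_m) : Prop :=
  (forall k, l1norm (p k) = 2 /\ sqsub (p k) d) /\ d = \sum_k p k.

Definition SBO_jump_Mconvex (m : nat) (f : 'cV[int]_m -> option rat) : Prop :=
  forall (z1 z2 : 'cV[int]_m) (v1 v2 : rat),
    f z1 = Some v1 -> f z2 = Some v2 ->
    exists (l : nat) (p : 'I_l -> 'cV[int]_m) (g : 'I_l -> rat),
      [/\ two_step_decomp (z2 - z1) p,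
          v2 = v1 + \sum_k g k
        & forall I : {set 'I_l},
            exists2 v, f (z1 + \sum_(k in I) p k) = Some v
                     & v <= v1 + \sum_(k in I) g k].

(* Main.v *)
Require Import Defs.
From Stdlib Require Import ClassicalEpsilon Classical.
From mathcomp Require Import all_boot all_order all_algebra zify ring.
Set Implicit Arguments. Unset Strict Implicit. Unset Printing Implicit Defensive.
Import Order.TTheory GRing.Theory Num.Theory.
Local Open Scope ring_scope.

Definition coh k (L : seq 'cV[int]_k) : Prop :=
  forall i : 'I_k, (forall y, y \in L -> 0 <= y i 0) \/ (forall y, y \in L -> y i 0 <= 0).

Definition good m n (M : 'M[int]_(m,n)) (d : 'cV[int]_n) (L : seq 'cV[int]_n)
  (r : 'cV[int]_n) : Prop :=
  [/\ r + \sum_(y <- L) y = d, coh (r :: L), M *m r = 0,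
      (forall y, y \in L -> l1norm (M *m y) = 2) & coh [seq M *m y | y <- L]].

Lemma dE k (a i : 'I_k) (z w : 'I_1) : (delta_mx a z : 'cV[int]_k) i w = (i == a)%:R.
Proof. by rewrite mxE (ord1 z) (ord1 w) eqxx andbT. Qed.

Lemma addE k (A B : 'cV[int]_k) i j : (A + B) i j = A i j + B i j.
Proof. by rewrite mxE. Qed.

Lemma addr_le0' (x y : int) : x <= 0 -> y <= 0 -> x + y <= 0.
Proof. lia. Qed.

Lemma sum0_ge0 (T : eqType) (L : seq T) (F : T -> int) :
  (forall y, y \in L -> 0 <= F y) -> \sum_(y <- L) F y <= 0 ->
  forall y, y \in L -> F y = 0.
Proof.
move=> H Hs y Hy.
have H0 : \sum_(z <- L) F z = 0.
  apply/eqP; rewrite eq_le Hs /= big_seq; apply: sumr_ge0 => z; exact: H.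
move: H0 => /eqP; rewrite big_seq psumr_eq0; last by move=> z; apply: H.
by move=> /allP/(_ y Hy)/implyP/(_ Hy)/eqP.
Qed.

Lemma coh_sum k (L : seq 'cV[int]_k) i : coh L ->
  (0 <= (\sum_(y <- L) y) i 0 -> forall y, y \in L -> 0 <= y i 0) /\
  ((\sum_(y <- L) y) i 0 <= 0 -> forall y, y \in L -> y i 0 <= 0).
Proof.
rewrite summxE => /(_ i) [H|H]; split => // Hs y Hy.
- by rewrite (sum0_ge0 H Hs Hy).
- have H' : forall z, z \in L -> 0 <= - z i 0 by move=> z /H; rewrite oppr_ge0.
  have Hs' : \sum_(z <- L) - z i 0 <= 0 by rewrite sumrN oppr_le0.
  by have := sum0_ge0 H' Hs' Hy; lia.
Qed.

Lemma coh_sub k (L L' : seq 'cV[int]_k) : coh L -> {subset L' <= L} -> coh L'.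
Proof. by move=> H Hs i; case: (H i) => Hi; [left|right] => y /Hs /Hi. Qed.

Lemma coh_opp k (L : seq 'cV[int]_k) : coh L -> coh (map -%R L).
Proof.
move=> H i; case: (H i) => Hi; [right|left] => z /mapP [y hy ->];
  by rewrite mxE ?oppr_le0 ?oppr_ge0 Hi.
Qed.

Lemma coh_sqsub k (L : seq 'cV[int]_k) y : coh L -> y \in L -> sqsub y (\sum_(z <- L) z).
Proof.
move=> H Hy i.
have E : (\sum_(z <- L) z) i 0 = y i 0 + \sum_(z <- rem y L) z i 0.
  by rewrite summxE (perm_big _ (perm_to_rem Hy)) big_cons.
rewrite E; case: (H i) => Hi.
- have h1 := Hi y Hy.
  have h2 : 0 <= \sum_(z <- rem y L) z i 0.
    by rewrite big_seq; apply: sumr_ge0 => z /mem_rem /Hi.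
  rewrite !ger0_norm //; try lia.
  by split; [rewrite lerDl | apply: mulr_ge0 => //; rewrite addr_ge0].
- have h1 := Hi y Hy.
  have h2 : \sum_(z <- rem y L) z i 0 <= 0.
    by rewrite big_seq; apply: sumr_le0 => z /mem_rem /Hi.
  rewrite !ler0_norm //; try lia.
  by split; [rewrite lerN2 gerDl | apply: mulr_le0 => //; rewrite -oppr_ge0 opprD addr_ge0 // oppr_ge0].
Qed.

Lemma l1normD k (x y : 'cV[int]_k) : l1norm (x + y) <= l1norm x + l1norm y.
Proof. by rewrite /l1norm -big_split; apply: ler_sum => i _; rewrite mxE ler_normD. Qed.

Lemma l1normN k (x : 'cV[int]_k) : l1norm (- x) = l1norm x.
Proof. by apply: eq_bigr => i _; rewrite mxE normrN. Qed.

Lemma sum_delta k (a : 'I_k) : \sum_i ((i == a)%:R : int) = 1.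
Proof. by rewrite (bigD1 a) //= eqxx big1 ?addr0 // => i /negbTE ->. Qed.

Lemma l1norm_delta k (a : 'I_k) : l1norm (delta_mx a 0 : 'cV[int]_k) = 1.
Proof.
rewrite /l1norm -(sum_delta a); apply: eq_bigr => i _; rewrite dE.
by case: (i == a).
Qed.

Lemma l1norm_inc k (x : 'cV[int]_k) a : x a 0 <= -1 ->
  l1norm (x + delta_mx a 0) = l1norm x - 1.
Proof.
move=> Ha; rewrite /l1norm (bigD1 a) //= [X in _ = X - _](bigD1 a) //=.
rewrite mxE dE eqxx.
have -> : \sum_(i | i != a) `|(x + delta_mx a 0) i 0| = \sum_(i | i != a) `|x i 0|.
  by apply: eq_bigr => i /negbTE hi; rewrite mxE dE hi addr0.
have T : (true%:R : int) = 1 by [].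
rewrite T (@ler0_norm _ (x a 0 + 1)); last by lia.
rewrite ltr0_norm; last by lia.
ring.
Qed.

Lemma l1norm0 k (x : 'cV[int]_k) : l1norm x = 0 -> x = 0.
Proof.
move=> /eqP; rewrite /l1norm psumr_eq0 // => /allP H.
apply/matrixP => i j; rewrite (ord1 j) mxE.
by have := H i (mem_index_enum i); rewrite normr_eq0 => /eqP.
Qed.

Lemma l1norm_par k (x : 'cV[int]_k) : exists t, l1norm x = \sum_i x i 0 + 2 * t.
Proof.
exists (\sum_i (if x i 0 < 0 then - x i 0 else 0)).
rewrite /l1norm mulr_sumr -big_split; apply: eq_bigr => i _ /=.
case: (ltrP (x i 0) 0) => h; [rewrite ltr0_norm //; lia | rewrite ger0_norm //; lia].
Qed.

Lemma inc_col m n (M : 'M[int]_(m,n)) : simple_graph_incidence M ->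
  forall e, exists a b, a != b /\ M *m (delta_mx e 0 : 'cV[int]_n) = delta_mx a 0 + delta_mx b 0.
Proof.
case=> H01 H2 _ e.
have /cards2P [a [b [hab hS]]] : #|[set i | M i e == 1]| == 2%N by rewrite H2.
exists a, b; split => //; rewrite -colE; apply/matrixP => i j.
rewrite (ord1 j) !mxE !andbT.
have := congr1 (fun A : {set 'I_m} => i \in A) hS; rewrite /= !inE.
case: (H01 i e) => ->; rewrite ?eqxx /=.
- have h01 : ((0 : int) == 1) = false by [].
  rewrite h01 => /esym/norP [/negbTE -> /negbTE ->] //.
- move=> /esym /orP [] /eqP ->; rewrite eqxx //.
  + by rewrite (negbTE hab).
  + by rewrite eq_sym (negbTE hab).
Qed.

Lemma colsum m n (M : 'M[int]_(m,n)) : simple_graph_incidence M ->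
  forall y : 'cV[int]_n, \sum_i (M *m y) i 0 = 2 * \sum_j y j 0.
Proof.
move=> Hinc y.
have Hc : forall j, \sum_i M i j = 2.
  move=> j; have [a [b [_ H]]] := inc_col Hinc j.
  have -> : \sum_i M i j = \sum_i (M *m (delta_mx j 0 : 'cV[int]_n)) i 0.
    by apply: eq_bigr => i _; rewrite -colE mxE.
  by rewrite H; under eq_bigr do rewrite mxE !dE; rewrite big_split /= !sum_delta.
under eq_bigr do rewrite mxE.
rewrite exchange_big mulr_sumr; apply: eq_bigr => j _.
by rewrite -mulr_suml Hc mulrC.
Qed.

Lemma even_norm m n (M : 'M[int]_(m,n)) : simple_graph_incidence M ->
  forall y : 'cV[int]_n, exists t, l1norm (M *m y) = 2 * t.
Proof.
move=> Hinc y; have [t ->] := l1norm_par (M *m y).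
by exists (\sum_j y j 0 + t); rewrite colsum // mulrDr.
Qed.

Lemma good_opp m n (M : 'M[int]_(m,n)) d L r :
  good M d L r -> good M (- d) (map -%R L) (- r).
Proof.
case=> G1 G2 G3 G4 G5; split.
- by rewrite big_map sumrN -opprD G1.
- exact: (coh_opp G2).
- by rewrite mulmxN G3 oppr0.
- by move=> z /mapP [y hy ->]; rewrite mulmxN l1normN G4.
- rewrite -map_comp.
  have -> : [seq (mulmx M \o -%R) y | y <- L] = map -%R [seq M *m y | y <- L].
    by rewrite -map_comp; apply: eq_map => y /=; rewrite mulmxN.
  exact: coh_opp.
Qed.

Lemma l1norm_ge0 k (x : 'cV[int]_k) : 0 <= l1norm x.
Proof. by apply: sumr_ge0 => i _. Qed.

Lemma finish m n (M : 'M[int]_(m,n)) d0 L r (e : 'I_n) (a b : 'I_m) S L0 :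
  simple_graph_incidence M ->
  good M d0 L r -> 0 <= d0 e 0 -> a != b ->
  M *m (delta_mx e 0 : 'cV[int]_n) = delta_mx a 0 + delta_mx b 0 ->
  perm_eq L (S ++ L0) ->
  ((M *m d0) a 0 < 0 -> (M *m \sum_(y <- S) y) a 0 <= -1) ->
  ((M *m d0) b 0 < 0 -> (M *m \sum_(y <- S) y) b 0 <= -1) ->
  l1norm (M *m (\sum_(y <- S) y + delta_mx e 0)) <= 2 ->
  exists L' r', good M (d0 + delta_mx e 0) L' r'.
Proof.
move=> Hinc [G1 G2 G3 G4 G5] He Hab Hcol Hp Ha Hb Hn.
set sS := \sum_(y <- S) y in Ha Hb Hn *.
set de : 'cV[int]_n := delta_mx e 0 in Hcol Hn *.
set yn := sS + de in Hn *.
have memL : forall y, (y \in L) = (y \in S) || (y \in L0).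
  by move=> y; rewrite (perm_mem Hp) mem_cat.
have sumL : \sum_(y <- L) y = sS + \sum_(y <- L0) y by rewrite (perm_big _ Hp) big_cat.
have SL : {subset S <= L} by move=> y hy; rewrite memL hy.
have L0L : {subset L0 <= L} by move=> y hy; rewrite memL hy orbT.
have sumRL : \sum_(y <- r :: L) y = d0 by rewrite big_cons.
have Eclass : forall j, (0 <= d0 j 0 -> forall y, y \in r :: L -> 0 <= y j 0) /\
    (d0 j 0 <= 0 -> forall y, y \in r :: L -> y j 0 <= 0).
  by move=> j; have := coh_sum j G2; rewrite sumRL.
have wE : M *m d0 = \sum_(z <- [seq M *m y | y <- L]) z.
  by rewrite -G1 mulmxDr G3 add0r mulmx_sumr big_map.
have Vclass : forall i,
   (0 <= (M *m d0) i 0 -> forall z, z \in [seq M *m y | y <- L] -> 0 <= z i 0) /\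
   ((M *m d0) i 0 <= 0 -> forall z, z \in [seq M *m y | y <- L] -> z i 0 <= 0).
  by move=> i; have := coh_sum i G5; rewrite wE.
have sSE : forall j, sS j 0 = \sum_(y <- S) y j 0 by move=> j; rewrite summxE.
have MsSE : forall i, (M *m sS) i 0 = \sum_(y <- S) (M *m y) i 0.
  by move=> i; rewrite mulmx_sumr summxE.
have ynE : forall j, yn j 0 = sS j 0 + (j == e)%:R.
  by move=> j; rewrite mxE /de mxE eqxx andbT.
have MynE : forall i, (M *m yn) i 0 = (M *m sS) i 0 + (i == a)%:R + (i == b)%:R.
  by move=> i; rewrite mulmxDr Hcol !addE !dE addrA.
have T1 : (true%:R : int) = 1 by [].
have T0 : (false%:R : int) = 0 by [].
have EF : forall j, (0 <= r j 0 /\ 0 <= yn j 0 /\ forall y, y \in L0 -> 0 <= y j 0) \/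
                    (r j 0 <= 0 /\ yn j 0 <= 0 /\ forall y, y \in L0 -> y j 0 <= 0).
  move=> j; case: (lerP 0 (d0 j 0)) => hj.
  - left; have H := (Eclass j).1 hj.
    split; first by apply: H; rewrite inE eqxx.
    split; last by move=> y hy; apply: H; rewrite inE L0L ?orbT.
    rewrite ynE sSE; apply: addr_ge0; last by case: (j == e).
    by rewrite big_seq; apply: sumr_ge0 => y hy; apply: H; rewrite inE SL ?orbT.
  - right; have H := (Eclass j).2 (ltW hj).
    have hje : (j == e) = false.
      by apply/negbTE/eqP => E; move: hj; rewrite E ltNge He.
    split; first by apply: H; rewrite inE eqxx.
    split; last by move=> y hy; apply: H; rewrite inE L0L ?orbT.
    rewrite ynE sSE hje T0 addr0.
    by rewrite big_seq; apply: sumr_le0 => y hy; apply: H; rewrite inE SL ?orbT.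
have VF : forall i, (0 <= (M *m yn) i 0 /\ forall z, z \in [seq M *m y | y <- L0] -> 0 <= z i 0) \/
                    ((M *m yn) i 0 <= 0 /\ forall z, z \in [seq M *m y | y <- L0] -> z i 0 <= 0).
  have sub0 : forall z, z \in [seq M *m y | y <- L0] -> z \in [seq M *m y | y <- L].
    by move=> z /mapP [y hy ->]; apply: map_f; apply: L0L.
  move=> i; case: (lerP 0 ((M *m d0) i 0)) => hi.
  - left; have H := (Vclass i).1 hi.
    split; last by move=> z /sub0 /H.
    rewrite MynE MsSE; apply: addr_ge0; last by case: (i == b).
    apply: addr_ge0; last by case: (i == a).
    by rewrite big_seq; apply: sumr_ge0 => y hy; apply: H; apply: map_f; apply: SL.
  - right; have H := (Vclass i).2 (ltW hi).
    split; last by move=> z /sub0 /H.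
    rewrite MynE.
    case: (eqVneq i a) => [E|hia].
      rewrite E ?eqxx ?(negbTE Hab) ?T1 ?T0; move: hi; rewrite E => /Ha; lia.
    case: (eqVneq i b) => [E|hib].
      rewrite E ?eqxx ?T1 ?T0; move: hi; rewrite E => /Hb; lia.
    rewrite ?T0 !addr0 MsSE.
    by rewrite big_seq; apply: sumr_le0 => y hy; apply: H; apply: map_f; apply: SL.
case: (boolP (l1norm (M *m yn) == 0)) => Hz.
- exists L0, (r + yn); split.
  + by rewrite -G1 sumL /yn -!addrA (addrC de).
  + move=> j; case: (EF j) => [[h1 [h2 h3]]|[h1 [h2 h3]]]; [left|right] => y;
      rewrite inE => /orP [/eqP ->|/h3] //; rewrite mxE;
      [exact: addr_ge0 | exact: addr_le0'].
  + by rewrite mulmxDr G3 (l1norm0 (eqP Hz)) addr0.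
  + by move=> y /L0L /G4.
  + apply: (coh_sub G5) => z /mapP [y hy ->]; apply: map_f; exact: L0L.
- exists (yn :: L0), r; split.
  + by rewrite -G1 sumL big_cons /yn -!addrA (addrC de).
  + move=> j; case: (EF j) => [[h1 [h2 h3]]|[h1 [h2 h3]]]; [left|right] => y;
      rewrite !inE => /or3P [/eqP ->|/eqP ->|/h3] //.
  + exact: G3.
  + move=> y; rewrite inE => /orP [/eqP ->|/L0L /G4] //.
    have [t Ht] := even_norm Hinc yn.
    have h0 := l1norm_ge0 (M *m yn).
    move: Hz Hn h0; rewrite Ht; lia.
  + move=> i; case: (VF i) => [[h1 h2]|[h1 h2]]; [left|right] => z;
      rewrite /= inE => /orP [/eqP ->|/h2] //.
Qed.

Lemma exists_neg (T : eqType) (L : seq T) (F : T -> int) :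
  \sum_(y <- L) F y < 0 -> exists2 y, y \in L & F y < 0.
Proof.
move=> H; case: (boolP (has (fun y => F y < 0) L)) => [/hasP [y hy hyi]|/hasPn Hn].
  by exists y.
have : 0 <= \sum_(y <- L) F y.
  by rewrite big_seq; apply: sumr_ge0 => y /Hn; rewrite -leNgt.
by rewrite leNgt H.
Qed.

Lemma iH1 (x y : int) : x < 0 -> y <= 0 -> x + y <= -1. Proof. lia. Qed.
Lemma iH2 (x y : int) : x <= 0 -> y < 0 -> x + y <= -1. Proof. lia. Qed.
Lemma iH3 (x : int) : x < 0 -> x <= -1. Proof. lia. Qed.

Lemma iH4 (x y : int) : x + y < 0 -> 0 <= y -> x <= -1. Proof. lia. Qed.

Lemma step m n (M : 'M[int]_(m,n)) d0 L r e : simple_graph_incidence M ->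
  good M d0 L r -> 0 <= d0 e 0 -> exists L' r', good M (d0 + delta_mx e 0) L' r'.
Proof.
move=> Hinc G He.
have [a [b [Hab Hcol]]] := inc_col Hinc e.
case: (G) => G1 G2 G3 G4 G5.
have wE' : M *m d0 = \sum_(z <- [seq M *m y | y <- L]) z.
  by rewrite -G1 mulmxDr G3 add0r mulmx_sumr big_map.
have wE : forall i, (M *m d0) i 0 = \sum_(y <- L) (M *m y) i 0.
  by move=> i; rewrite wE' summxE big_map.
have Vclass : forall i, (M *m d0) i 0 <= 0 -> forall y, y \in L -> (M *m y) i 0 <= 0.
  move=> i hi y hy; have := (coh_sum i G5).2; rewrite -wE' => /(_ hi); apply.
  exact: map_f.
suff main : forall a b, a != b ->
    M *m (delta_mx e 0 : 'cV[int]_n) = delta_mx a 0 + delta_mx b 0 ->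
    ((M *m d0) a 0 < 0) \/ (0 <= (M *m d0) a 0 /\ 0 <= (M *m d0) b 0) ->
    exists L' r', good M (d0 + delta_mx e 0) L' r'.
  case: (ltrP ((M *m d0) a 0) 0) => ha; first by apply: (main a b) => //; left.
  case: (ltrP ((M *m d0) b 0) 0) => hb.
    by apply: (main b a); [rewrite eq_sym | rewrite Hcol addrC | left].
  by apply: (main a b) => //; right.
move=> {Hab Hcol a b} a b Hab Hcol [ha|[ha hb]]; last first.
  apply: (@finish _ _ M d0 L r e a b [::] L Hinc G He Hab Hcol) => //.
  - by move=> h; move: ha; rewrite leNgt h.
  - by move=> h; move: hb; rewrite leNgt h.
  - rewrite big_nil add0r Hcol; apply: le_trans (l1normD _ _) _.
    by rewrite !l1norm_delta.
have [y hy hya] : exists2 y, y \in L & (M *m y) a 0 < 0.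
  by apply: exists_neg; rewrite -wE.
have Hrem := perm_to_rem hy.
case: (boolP (((M *m d0) b 0 < 0) && has (fun y' => (M *m y') b 0 < 0) (rem y L))).
- case/andP => hb /hasP [y' hy' hy'b].
  apply: (@finish _ _ M d0 L r e a b [:: y; y'] (rem y' (rem y L)) Hinc G He Hab Hcol).
  + apply: (perm_trans Hrem); rewrite /= perm_cons; exact: perm_to_rem hy'.
  + move=> _; rewrite !big_cons big_nil addr0 mulmxDr addE.
    exact: (iH1 hya (Vclass a (ltW ha) y' (mem_rem hy'))).
  + move=> _; rewrite !big_cons big_nil addr0 mulmxDr addE.
    exact: (iH2 (Vclass b (ltW hb) y hy) hy'b).
  + rewrite !big_cons big_nil addr0 !mulmxDr Hcol addrACA.
    apply: le_trans (l1normD _ _) _.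
    rewrite !l1norm_inc ?G4 ?(mem_rem hy') //; try exact: iH3.
- move=> Hno.
  apply: (@finish _ _ M d0 L r e a b [:: y] (rem y L) Hinc G He Hab Hcol).
  + exact: Hrem.
  + by move=> _; rewrite big_cons big_nil addr0; exact: iH3.
  + move=> hb; rewrite big_cons big_nil addr0.
    have Hall : forall y', y' \in rem y L -> 0 <= (M *m y') b 0.
      move=> y' hy'; move: Hno; rewrite hb /= => /hasPn /(_ y' hy').
      by rewrite -leNgt.
    have E : (M *m d0) b 0 = (M *m y) b 0 + \sum_(y' <- rem y L) (M *m y') b 0.
      by rewrite wE (perm_big _ Hrem) big_cons.
    have : 0 <= \sum_(y' <- rem y L) (M *m y') b 0.
      by rewrite big_seq; apply: sumr_ge0.
    rewrite E in hb; move: hb; exact: iH4.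
  + rewrite big_cons big_nil addr0 mulmxDr Hcol addrA.
    apply: le_trans (l1normD _ _) _.
    by rewrite l1norm_inc ?G4 ?l1norm_delta //; exact: iH3.
Qed.

Lemma subE k (A B : 'cV[int]_k) i j : (A - B) i j = A i j - B i j.
Proof. by rewrite !mxE. Qed.

Lemma decomp m n (M : 'M[int]_(m,n)) : simple_graph_incidence M ->
  forall d : 'cV[int]_n, exists L r, good M d L r.
Proof.
move=> Hinc.
suff H : forall N (d : 'cV[int]_n), (\sum_j `|d j 0%R|)%N = N -> exists L r, good M d L r.
  by move=> d; exact: H.
elim=> [|N IH] d Hd.
- have d0 : d = 0.
    apply/matrixP => i j; rewrite (ord1 j) mxE.
    move/eqP: Hd; rewrite sum_nat_eq0 => /forallP /(_ i) /eqP.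
    by move/eqP; rewrite absz_eq0 => /eqP.
  exists [::], d; split.
  + by rewrite big_nil addr0.
  + by move=> i; left => y; rewrite inE => /eqP ->; rewrite d0 mxE.
  + by rewrite d0 mulmx0.
  + by [].
  + by move=> i; left.
- case: (boolP [exists j, d j 0 != 0]) => [/existsP [j hj]|/existsPn Hn]; last first.
    move: Hd; rewrite big1 // => i _; have := Hn i; rewrite negbK => /eqP ->.
    by [].
  suff Hpos : forall d' : 'cV[int]_n, (\sum_j `|d' j 0%R|)%N = N.+1 -> 0 < d' j 0 ->
      exists L r, good M d' L r.
    case: (ltrP 0 (d j 0)) => h; first exact: Hpos.
    have h' : 0 < (- d) j 0 by rewrite mxE oppr_gt0 lt_neqAle hj h.
    have HN : (\sum_j `|(- d) j 0%R|)%N = N.+1.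
      by rewrite -Hd; apply: eq_bigr => i _; rewrite mxE abszN.
    have [L [r G]] := Hpos (- d) HN h'.
    by exists (map -%R L), (- r); rewrite -(opprK d); exact: good_opp G.
  move=> d' Hd' h.
  set d0 := d' - delta_mx j 0.
  have key : forall i, (`|d' i 0%R| = `|d0 i 0%R| + (i == j))%N.
    move=> i; rewrite /d0 subE dE; case: eqVneq => [->|hij].
      move: h; generalize (d' j 0) => x hx.
      rewrite (_ : (true%:R : int) = 1) //; lia.
    by rewrite subr0 addn0.
  have Hd0 : (\sum_i `|d0 i 0%R|)%N = N.
    have : (\sum_i `|d' i 0%R|)%N = (\sum_i `|d0 i 0%R| + \sum_i (i == j : nat))%N.
      by rewrite -big_split; apply: eq_bigr => i _; rewrite key.
    have -> : (\sum_i (i == j : nat))%N = 1%N.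
      by rewrite (bigD1 j) //= eqxx big1 // => i /negbTE ->.
    rewrite Hd'; lia.
  have [L [r G]] := IH d0 Hd0.
  have He : 0 <= d0 j 0.
    rewrite /d0 subE dE eqxx (_ : (true%:R : int) = 1) //.
    move: h; generalize (d' j 0) => x; lia.
  have [L' [r' G']] := step Hinc G He.
  by exists L', r'; move: G'; rewrite /d0 subrK.
Qed.

Lemma cost0 n (c : 'cV[int]_n) : cost c 0 = 0.
Proof. by rewrite /cost big1 // => j _; rewrite mxE mulr0. Qed.

Lemma costD n (c x y : 'cV[int]_n) : cost c (x + y) = cost c x + cost c y.
Proof. by rewrite /cost -big_split; apply: eq_bigr => j _; rewrite mxE mulrDr. Qed.

Lemma costN n (c x : 'cV[int]_n) : cost c (- x) = - cost c x.
Proof. by rewrite /cost -sumrN; apply: eq_bigr => j _; rewrite mxE mulrN. Qed.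

Lemma cost_sum n (c : 'cV[int]_n) (I : Type) (r : seq I) (P : pred I) (F : I -> 'cV[int]_n) :
  cost c (\sum_(i <- r | P i) F i) = \sum_(i <- r | P i) cost c (F i).
Proof. exact: (big_morph (cost c) (costD c) (cost0 c)). Qed.

Lemma intr_sum (I : Type) (r : seq I) (P : pred I) (F : I -> int) :
  ((\sum_(i <- r | P i) F i)%:~R : rat) = \sum_(i <- r | P i) (F i)%:~R.
Proof. exact: (big_morph (fun z : int => (z%:~R : rat)) (@intrD _) (mulr0z 1)). Qed.

Lemma fcM_some m n (M : 'M[int]_(m,n)) c z v : f_cM M c z = Some v ->
  exists x, [/\ feasible M z x, v = (cost c x)%:~R &
                forall x', feasible M z x' -> cost c x <= cost c x'].
Proof.
rewrite /f_cM; case: excluded_middle_informative => // H [<-].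
case: (constructive_indefinite_description _ H) => w /= [[x Hx Hc] Hmin].
by exists x; split => //; rewrite Hc.
Qed.

Lemma fcM_min m n (M : 'M[int]_(m,n)) c z v : is_min_cost M c z v ->
  f_cM M c z = Some (v%:~R).
Proof.
move=> [[x Hx Hc] Hmin]; rewrite /f_cM; case: excluded_middle_informative => [H|H];
  last by exfalso; apply: H; exists v; split; [exists x|].
case: (constructive_indefinite_description _ H) => w /= [[x' Hx' Hc'] Hmin'].
have h1 := Hmin x' Hx'; have h2 := Hmin' x Hx.
rewrite Hc' in h1; rewrite Hc in h2.
by have -> : w = v by lia.
Qed.

Lemma int_min (P : int -> Prop) (B : int) : (exists v, P v) -> (forall v, P v -> B <= v) ->
  exists v, P v /\ forall w, P w -> v <= w.
Proof.
move=> [v0 Pv0] HB; apply: NNPP => Hno.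
have H : forall k : nat, forall w, P w -> B + k%:Z <= w.
  elim=> [|k IH] w Pw; first by rewrite addr0; apply: HB.
  have Hw := IH w Pw.
  have : w != B + k%:Z.
    by apply/eqP => Ew; apply: Hno; exists w; split => // w' Pw'; rewrite Ew; exact: IH.
  lia.
have := H `|v0 - B|%N.+1 v0 Pv0; lia.
Qed.

Lemma lbterm (a x Z : int) : 0 <= x -> x <= Z -> - (`|a| * Z) <= a * x.
Proof. by case: (lerP 0 a) => h; [rewrite ger0_norm // | rewrite ltr0_norm //]; nia. Qed.

Lemma iH5 (p q : int) : 0 <= p -> 0 <= q -> p <= 2 * (p + q). Proof. lia. Qed.

Lemma cost_lb m n (M : 'M[int]_(m,n)) c z : simple_graph_incidence M ->
  exists B, forall x, feasible M z x -> B <= cost c x.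
Proof.
move=> Hinc; exists (- ((\sum_j `|c j 0|) * \sum_i z i 0)).
move=> x [Hx Hpos].
have HS : \sum_i z i 0 = 2 * \sum_j x j 0 by rewrite -Hx colsum.
rewrite mulr_suml -sumrN /cost; apply: ler_sum => j _; apply: lbterm => //.
rewrite HS (bigD1 j) //=.
have : 0 <= \sum_(i | i != j) x i 0 by apply: sumr_ge0.
have := Hpos j.
exact: iH5.
Qed.

Lemma exists_min m n (M : 'M[int]_(m,n)) c z x : simple_graph_incidence M ->
  feasible M z x -> exists v, is_min_cost M c z v.
Proof.
move=> Hinc Hx; have [B HB] := cost_lb c z Hinc.
have [v [[x' Hx' Hc] Hv]] := @int_min (fun v => exists2 x, feasible M z x & cost c x = v) B
   (ex_intro _ (cost c x) (ex_intro2 _ _ x Hx erefl)) (fun v '(ex_intro2 x' Hx' Hc) =>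
     eq_ind _ (fun w => B <= w) (HB x' Hx') _ Hc).
exists v; split; first by exists x'.
by move=> y Hy; apply: Hv; exists y.
Qed.

Lemma iB (x1 x2 s t : int) : 0 <= x1 -> 0 <= x2 -> x2 - x1 = s + t ->
  (0 <= s) \/ (t <= 0) -> 0 <= x1 + s.
Proof. move=> h1 h2 E [h|h]; lia. Qed.

Theorem proposition17 (m n : nat) (M : 'M[int]_(m, n)) (c : 'cV[int]_n) :
  simple_graph_incidence M -> SBO_jump_Mconvex (f_cM M c).
Proof.
move=> Hinc z1 z2 v1 v2 /fcM_some [x1 [[F1 P1] -> O1]] /fcM_some [x2 [[F2 P2] -> O2]].
have [L [r [G1 G2 G3 G4 G5]]] := decomp Hinc (x2 - x1).
pose l := size L.
pose F := fun k : 'I_l => nth 0 L k.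
have HF : forall k : 'I_l, F k \in L by move=> k; apply: mem_nth.
have sumF : \sum_(k < l) F k = \sum_(y <- L) y by rewrite (big_nth 0) big_mkord.
have HL : forall y, y \in L -> y \in r :: L by move=> y hy; rewrite inE hy orbT.
have nonneg : forall s t : 'cV[int]_n, x2 - x1 = s + t ->
    (forall j, (forall y, y \in r :: L -> 0 <= y j 0) -> 0 <= s j 0) ->
    (forall j, (forall y, y \in r :: L -> y j 0 <= 0) -> t j 0 <= 0) ->
    forall j, 0 <= (x1 + s) j 0.
  move=> s t E Hs Ht j; rewrite addE; apply: (iB (P1 j) (P2 j)).
    by rewrite -subE E addE.
  by case: (G2 j) => Hc; [left; apply: Hs | right; apply: Ht].
have nonnegI : forall I : {set 'I_l}, forall j, 0 <= (x1 + \sum_(k in I) F k) j 0.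
  move=> I; apply: (nonneg _ (r + \sum_(k | k \notin I) F k)).
  - by rewrite -G1 -sumF (bigID (fun k => k \in I)) /= addrCA.
  - move=> j Hc; rewrite summxE; apply: sumr_ge0 => k _; apply: Hc; exact: HL.
  - move=> j Hc; rewrite addE summxE; apply: addr_le0'; first by apply: Hc; rewrite inE eqxx.
    by apply: sumr_le0 => k _; apply: Hc; exact: HL.
have costr : cost c r = 0.
  have Fa : feasible M z1 (x1 + r).
    split; first by rewrite mulmxDr G3 addr0.
    apply: (nonneg _ (\sum_(y <- L) y)); first by rewrite G1.
    - by move=> j Hc; apply: Hc; rewrite inE eqxx.
    - move=> j Hc; rewrite summxE big_seq; apply: sumr_le0 => y hy; apply: Hc; exact: HL.
  have EQ : x1 + \sum_(y <- L) y = x2 - r.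
    have ES : \sum_(y <- L) y = x2 - x1 - r by rewrite -G1 (addrC r) addrK.
    by rewrite ES addrA (addrC x1) subrK.
  have Fb : feasible M z2 (x1 + \sum_(y <- L) y).
    split; first by rewrite EQ mulmxBr G3 subr0.
    apply: (nonneg _ r).
    - by rewrite -G1 addrC.
    - move=> j Hc; rewrite summxE big_seq; apply: sumr_ge0 => y hy; apply: Hc; exact: HL.
    - by move=> j Hc; apply: Hc; rewrite inE eqxx.
  have h1 := O1 _ Fa; have h2 := O2 _ Fb.
  rewrite costD in h1; rewrite EQ costD costN in h2.
  lia.
have Ez : z2 - z1 = \sum_(z <- [seq M *m y | y <- L]) z.
  by rewrite -F1 -F2 -mulmxBr -G1 mulmxDr G3 add0r mulmx_sumr big_map.
exists l, (fun k => M *m F k), (fun k => (cost c (F k))%:~R); split.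
- split.
  + move=> k; split; first exact: G4 (HF k).
    rewrite Ez; apply: coh_sqsub G5 _; exact: map_f.
  + by rewrite Ez big_map (big_nth 0) big_mkord.
- have -> : cost c x2 = cost c x1 + \sum_(k < l) cost c (F k).
    have -> : x2 = x1 + (r + \sum_(k < l) F k) by rewrite sumF G1 addrC subrK.
    by rewrite !costD costr add0r cost_sum.
  by rewrite intrD; congr (_ + _); exact: intr_sum.
- move=> I.
  have HfI : feasible M (z1 + \sum_(k in I) M *m F k) (x1 + \sum_(k in I) F k).
    by split; [rewrite mulmxDr mulmx_sumr F1 | exact: nonnegI].
  have [v Hv] := exists_min c Hinc HfI.
  exists (v%:~R); first exact: fcM_min Hv.
  have := Hv.2 _ HfI; rewrite costD cost_sum => h.
  by rewrite -[X in _ <= _ + X]intr_sum -intrD ler_int.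
Qed.
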